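(* Let $X$ be a time-homogeneous Markov chain on $\mathbf{R}$ with transition kernel $P$, arbitrary initial distribution, and renewal measure $U(B)=\sum_{n\ge0}\mathbf{P}\{X_n\in B\}$. Suppose there exists $A>0$ such that $\varepsilon:=\inf_{x\in\mathbf{R}}\mathbf{E}\min\{\xi(x),A\}>0$, and that $\delta:=\inf_{x\in\mathbf{R}}\mathbf{P}\{X_n>x\text{ for all }n\ge1\mid X_0=x\}>0$. Then $U(x,x+h]\le (A+h)/(\varepsilon\delta)$ for all $x\in\mathbf{R}$ and $h>0$; in particular $\sup_{k\in\mathbf{Z}}U(k,k+1]<\infty$.
   Context: $\xi(x)$ denotes a random variable distributed as the jump of the chain from $x$: $\mathbf{P}\{x+\xi(x)\in B\}=P(x,B)$. *)

(* Defs.v *)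
From HB Require Import structures.
From mathcomp Require Import all_boot all_order all_algebra.
From mathcomp Require Import all_classical all_reals all_analysis.
Set Implicit Arguments. Unset Strict Implicit. Unset Printing Implicit Defensive.
Import Order.TTheory GRing.Theory Num.Theory.
Local Open Scope classical_set_scope.
Local Open Scope ring_scope.
Local Open Scope ereal_scope.

(* A time-homogeneous Markov chain on R is described (in law) by its
   transition kernel P : R.-pker R ~> R and its initial distribution mu. *)

Fixpoint kpow (R : realType) (P : R.-pker R ~> R) (n : nat) (f : R -> \bar R)
  : R -> \bar R :=
  match n with
  | O => f
  | S m => fun x => \int[P x]_y kpow P m f y
  end.

Definition chain_law (R : realType) (P : R.-pker R ~> R)
  (mu : probability R R) (n : nat) (B : set R) : \bar R :=
  \int[mu]_x kpow P n (fun y => (\1_B y)%:E) x.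

Definition renewal (R : realType) (P : R.-pker R ~> R)
  (mu : probability R R) (B : set R) : \bar R :=
  \sum_(0 <= n <oo) chain_law P mu n B.

(* E min{xi(x), A} = \int P(x,dy) min(y - x, A). *)
Definition trunc_drift (R : realType) (P : R.-pker R ~> R) (A x : R) : \bar R :=
  \int[P x]_y (Num.min (y - x) A)%:E.

(* stay_above P c N y = P_y{X_1 > c, ..., X_N > c}. *)
Fixpoint stay_above (R : realType) (P : R.-pker R ~> R) (c : R) (N : nat)
  : R -> \bar R :=
  match N with
  | O => fun _ => 1
  | S M => fun y => \int[P y]_z ((\1_(`]c, +oo[) z)%:E * stay_above P c M z)
  end.

(* P{X_n > x for all n >= 1 | X_0 = x}, as the (monotone) limit of
   P_x{X_1 > x, ..., X_N > x} as N -> oo (continuity from above). *)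
Definition never_below (R : realType) (P : R.-pker R ~> R) (x : R) : \bar R :=
  limn (fun N => stay_above P x N x).

(* Main.v *)
Require Import Defs.
From HB Require Import structures.
From mathcomp Require Import all_boot all_order all_algebra.
From mathcomp Require Import all_classical all_reals all_analysis.
From mathcomp Require Import measurable_realfun.
From mathcomp Require Import lra ring.
Import Order.TTheory GRing.Theory Num.Theory.
Local Open Scope classical_set_scope.
Local Open Scope ring_scope.

Section S.
Context (R : realType) (P : R.-pker R ~> R).
Local Open Scope ereal_scope.

Lemma kpow_ge0 (n : nat) (f : R -> \bar R) : (forall y, 0 <= f y) -> forall y, 0 <= kpow P n f y.
Proof.
move=> f0; elim: n => [|n IH] y //=; exact: integral_ge0.
Qed.

Lemma kpow_meas (n : nat) (f : R -> \bar R) : (forall y, 0 <= f y) -> measurable_fun [set: R] f ->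
  measurable_fun [set: R] (kpow P n f).
Proof.
move=> f0 mf; elim: n => [|n IH] //=.
apply: (measurable_fun_integral_kernel (l := P)) => //.
- exact: measurable_kernel.
- exact: kpow_ge0.
Qed.

Lemma stay_ge0 (c : R) (N : nat) (y : R) : 0 <= stay_above P c N y.
Proof.
elim: N y => [|N IH] y //=; apply: integral_ge0 => z _.
by apply: mule_ge0 => //; rewrite lee_fin.
Qed.

Lemma meas_ind (B : set R) : measurable B ->
  measurable_fun [set: R] (fun z => (\1_B z)%:E : \bar R).
Proof. by move=> mB; apply/measurable_EFinP; exact: measurable_indic. Qed.

Lemma stay_meas (c : R) (N : nat) : measurable_fun [set: R] (stay_above P c N).
Proof.
elim: N => [|N IH] //=.
apply: (measurable_fun_integral_kernel (l := P)) => //.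
- exact: measurable_kernel.
- by move=> z; apply: mule_ge0; [by rewrite lee_fin indicE|exact: stay_ge0].
- by apply: emeasurable_funM => //; exact: meas_ind.
Qed.

Lemma Pset1 (y : R) : P y [set: R] = 1.
Proof. exact: prob_kernel. Qed.

Lemma stay_le1 (c : R) (N : nat) (y : R) : stay_above P c N y <= 1.
Proof.
elim: N y => [|N IH] y //=.
have -> : (1 : \bar R) = \int[P y]_z (cst 1 z) by rewrite integral_cst // mul1e Pset1.
apply: ge0_le_integral => //.
- by move=> z _; apply: mule_ge0; [by rewrite lee_fin indicE|exact: stay_ge0].
- by apply: emeasurable_funM => //; [exact: meas_ind| exact: stay_meas].
- move=> z _ /=; apply: (@le_trans _ _ (1 * 1)); last by rewrite mule1.
  apply: lee_pmul; [by rewrite lee_fin indicE|exact: stay_ge0| |exact: IH].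
  by rewrite lee_fin indicE; case: (_ \in _).
Qed.

Lemma ind_ge0 (B : set R) z : 0 <= ((\1_B z)%:E : \bar R).
Proof. by rewrite lee_fin indicE. Qed.

Lemma stay_S (c : R) (N : nat) (y : R) : stay_above P c N.+1 y =
  \int[P y]_z ((\1_(`]c, +oo[) z)%:E * stay_above P c N z).
Proof. by []. Qed.

Lemma stay_decr (c : R) (N : nat) (y : R) :
  stay_above P c N.+1 y <= stay_above P c N y.
Proof.
elim: N y => [|N IH] y; first exact: stay_le1.
rewrite (stay_S c N.+1) (stay_S c N).
apply: ge0_le_integral => //.
- by move=> z _; apply: mule_ge0; [exact: ind_ge0|exact: stay_ge0].
- by apply: emeasurable_funM => //; [exact: meas_ind| exact: stay_meas].
- by apply: emeasurable_funM => //; [exact: meas_ind| exact: stay_meas].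
- by move=> z _; apply: lee_wpmul2l; [exact: ind_ge0|exact: IH].
Qed.

Lemma stay_anti (c c' : R) (N : nat) (y : R) : (c <= c')%R ->
  stay_above P c' N y <= stay_above P c N y.
Proof.
move=> cc'; elim: N y => [|N IH] y //=.
apply: ge0_le_integral => //.
- by move=> z _; apply: mule_ge0; [exact: ind_ge0|exact: stay_ge0].
- by apply: emeasurable_funM => //; [exact: meas_ind| exact: stay_meas].
- by apply: emeasurable_funM => //; [exact: meas_ind| exact: stay_meas].
- move=> z _; apply: lee_pmul; [exact: ind_ge0|exact: stay_ge0| |exact: IH].
  rewrite lee_fin !indicE; rewrite !mem_setE !in_itv /= !andbT.
  case: (ltP c' z) => h; last by rewrite ler0n. rewrite (le_lt_trans cc' h) //.
Qed.

Lemma never_le (y : R) (N : nat) : never_below P y <= stay_above P y N y.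
Proof.
rewrite /never_below.
have ni : nonincreasing_seq (fun N => stay_above P y N y).
  by apply/nonincreasing_seqP => n; exact: stay_decr.
rewrite (cvg_lim _ (ereal_nonincreasing_cvgn ni)) //.
by apply: ereal_inf_lbound; exists N.
Qed.

Lemma mfun_sub (z : R) : measurable_fun [set: R] (fun w : R => (w - z)%R).
Proof. by apply: measurable_funB => //; exact: measurable_cst. Qed.

Lemma mfun_m (z A : R) : measurable_fun [set: R] (fun w : R => (Num.min (w - z) A)%R).
Proof. by apply: measurable_minr; [exact: mfun_sub|exact: measurable_cst]. Qed.

Lemma int_ell (z A eps : R) : (0 < A)%R ->
  eps%:E <= \int[P z]_w ((Num.min (w - z) A)%R)%:E ->
  \int[P z]_w (A - Num.min (w - z) A)%R%:E <= (A - eps)%:E.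
Proof.
move=> A0 hd.
set m := fun w : R => (Num.min (w - z) A)%R.
set F := EFin \o m.
have mF : measurable_fun [set: R] F by apply/measurable_EFinP; exact: mfun_m.
have mFp : measurable_fun [set: R] F^\+ by exact: measurable_funepos.
have mFn : measurable_fun [set: R] F^\- by exact: measurable_funeneg.
have mG : measurable_fun [set: R] (fun w => (A - Num.min (w - z) A)%R%:E).
  by apply/measurable_EFinP; apply: measurable_funB; [exact: measurable_cst|exact: mfun_m].
have G0 : forall w, 0 <= (A - Num.min (w - z) A)%R%:E.
  by move=> w; rewrite lee_fin subr_ge0 ge_min lexx orbT.
have eq1 : \int[P z]_w ((A - Num.min (w - z) A)%R%:E + F^\+ w) =
           \int[P z]_w ((cst A%:E) w + F^\- w).
  apply: eq_integral => w _; rewrite /F funerpos funerneg /= -!EFinD.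
  congr (_%:E); rewrite /funrpos /funrneg /=.
  case: (leP 0%R (m w)) => h.
  - rewrite (max_r (_ : - m w <= 0)%R); last by rewrite oppr_le0.
    rewrite /m; lra.
  - rewrite (max_l (_ : 0 <= - m w)%R); last by rewrite oppr_ge0 ltW.
    rewrite /m; lra.
rewrite ge0_integralD // in eq1.
rewrite ge0_integralD // in eq1; last first.
  by move=> w _; rewrite lee_fin ltW.
rewrite integral_cst // Pset1 mule1 in eq1.
have hd' : eps%:E <= \int[P z]_w F w by exact: hd.
rewrite integralE in hd'.
have Pp_le : \int[P z]_w F^\+ w <= A%:E.
  have -> : A%:E = \int[P z]_w (cst A%:E) w by rewrite integral_cst // Pset1 mule1.
  apply: ge0_le_integral => //.
  - move=> w _; rewrite /F funerpos /= lee_fin /funrpos /m.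
    by rewrite ge_max ge_min lexx orbT (ltW A0).
have X0 : 0 <= \int[P z]_w (A - Num.min (w - z) A)%R%:E by apply: integral_ge0 => w _; exact: G0.
have Pp0 : 0 <= \int[P z]_w F^\+ w by apply: integral_ge0.
have Nn0 : 0 <= \int[P z]_w F^\- w by apply: integral_ge0.
move: eq1 hd' Pp_le X0 Pp0 Nn0.
case: (\int[P z]_w (A - Num.min (w - z) A)%R%:E) => [x'| |];
case: (\int[P z]_w F^\+ w) => [p| |]; case: (\int[P z]_w F^\- w) => [n| |] //=.
all: try (move=> [] e; rewrite !lee_fin => *; lra).
Qed.

Section Main.
Variables (x h A eps delta : R).
Hypotheses (h0 : (0 < h)%R) (A0 : (0 < A)%R) (e0 : (0 < eps)%R) (d0 : (0 < delta)%R).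
Hypothesis hdr : forall z, eps%:E <= trunc_drift P A z.
Hypothesis hdl : forall z, delta%:E <= never_below P z.

Let B : set R := `]x, (x + h)%R].
Let c : R := (x + h)%R.
Let ind (z : R) : \bar R := (\1_B z)%:E.
Let v (N : nat) (z : R) : \bar R := \sum_(0 <= n < N) kpow P n ind z.
Let f (w : R) : R := (Num.min (Num.max (w - x) 0) (h + A))%R.
Let a : R := eps^-1.
Let M0 : R := ((A + h) / (eps * delta))%R.
Let c0 : R := (M0 * (1 - delta))%R.
Local Ltac lra' := move: (h0) (A0) (e0) (d0) => ? ? ? ?; lra.

Lemma delta_le1 : (delta <= 1)%R.
Proof.
have := le_trans (hdl 0%R) (never_le 0%R 0).
by rewrite /= lee_fin.
Qed.

Lemma sdel N z : (c <= z)%R -> delta%:E <= stay_above P c N z.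
Proof.
move=> cz; apply: le_trans (hdl z) _; apply: le_trans (never_le z N) _.
exact: stay_anti.
Qed.

Lemma f_ge0 w : (0 <= f w)%R.
Proof. by rewrite /f le_min le_max lexx orbT /=; apply: addr_ge0; apply: ltW. Qed.

Lemma f_le w : (f w <= h + A)%R.
Proof. by rewrite /f ge_min lexx orbT. Qed.

Lemma f_low z : (z <= x)%R -> f z = 0%R.
Proof.
move=> zx; rewrite /f (max_r (_ : z - x <= 0)%R); last by rewrite subr_le0.
by rewrite (min_l (_ : 0 <= h + A)%R) //; apply: addr_ge0; apply: ltW.
Qed.

Lemma f_in z : (x < z)%R -> (z <= x + h)%R -> f z = (z - x)%R.
Proof.
move=> xz zc; rewrite /f (max_l (_ : 0 <= z - x)%R); last by rewrite subr_ge0 ltW.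
rewrite (min_l (_ : z - x <= h + A)%R) //; lra'.
Qed.

Lemma f_drift z w : (x < z)%R -> (z <= x + h)%R ->
  ((z - x) + Num.min (w - z) A <= f w)%R.
Proof.
move=> xz zc; rewrite /f le_min; apply/andP; split.
- rewrite le_max; apply/orP; left.
  have : (Num.min (w - z) A <= w - z)%R by rewrite ge_min lexx.
  lra'.
- have : (Num.min (w - z) A <= A)%R by rewrite ge_min lexx orbT.
  lra'.
Qed.

Lemma mf : measurable_fun [set: R] f.
Proof.
apply: measurable_minr; last exact: measurable_cst.
apply: measurable_maxr; last exact: measurable_cst.
exact: mfun_sub.
Qed.

Lemma mB : measurable B.
Proof. exact: measurable_itv. Qed.

Lemma ind_ge0' z : 0 <= ind z.
Proof. exact: ind_ge0. Qed.

Lemma mind : measurable_fun [set: R] ind.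
Proof. exact: meas_ind mB. Qed.

Lemma v_ge0 N z : 0 <= v N z.
Proof. by apply: sume_ge0 => n _; apply: kpow_ge0; exact: ind_ge0'. Qed.

Lemma v_meas N : measurable_fun [set: R] (v N).
Proof.
apply: emeasurable_sum => n; apply: kpow_meas; [exact: ind_ge0'|exact: mind].
Qed.

Lemma v_S N z : v N.+1 z = ind z + \int[P z]_w v N w.
Proof.
rewrite /v big_nat_recl //=; congr (_ + _).
rewrite ge0_integral_sum //.
- by move=> n; apply: kpow_meas; [exact: ind_ge0'|exact: mind].
- by move=> n w _; apply: kpow_ge0; exact: ind_ge0'.
Qed.


Lemma mg : measurable_fun [set: R] (fun w => (h + A - f w)%R%:E).
Proof.
apply/measurable_EFinP; apply: measurable_funB; [exact: measurable_cst|exact: mf].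
Qed.

Lemma g_ge0 w : 0 <= (h + A - f w)%R%:E.
Proof. by rewrite lee_fin subr_ge0 f_le. Qed.

Lemma int_cst' (z r : R) : \int[P z]_w (cst r%:E) w = r%:E.
Proof. by rewrite integral_cst // Pset1 mule1. Qed.

Lemma drift_int z : (z <= c)%R ->
  \int[P z]_w (h + A - f w)%R%:E <= (h + A - f z - eps * \1_B z)%R%:E.
Proof.
move=> zc.
have [zx|xz] := leP z x.
  have -> : (\1_B z : R) = 0%R.
    by rewrite indicE mem_setE in_itv /= ltNge zx.
  rewrite f_low // mulr0 !subr0 -(int_cst' z (h + A)).
  apply: ge0_le_integral => //.
  - by move=> w _; exact: g_ge0.
  - exact: mg.
  - by move=> w _; rewrite lee_fin lerBlDr lerDl f_ge0.
have -> : (\1_B z : R) = 1%R by rewrite indicE mem_setE in_itv /= xz zc.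
rewrite f_in // mulr1.
apply: (@le_trans _ _ (\int[P z]_w ((h - (z - x))%R%:E + (A - Num.min (w - z) A)%R%:E))).
  apply: ge0_le_integral => //.
  - by move=> w _; exact: g_ge0.
  - exact: mg.
  - apply: emeasurable_funD; first exact: measurable_cst.
    apply/measurable_EFinP; apply: measurable_funB; [exact: measurable_cst|exact: mfun_m].
  - move=> w _; rewrite -EFinD lee_fin.
    have := @f_drift z w xz zc; lra'.
rewrite ge0_integralD //; first last.
- apply/measurable_EFinP; apply: measurable_funB; [exact: measurable_cst|exact: mfun_m].
- by move=> w _; rewrite lee_fin subr_ge0 ge_min lexx orbT.
- by move=> w _; rewrite lee_fin; move: zc; rewrite /c; lra'.
rewrite int_cst'.
apply: (@le_trans _ _ ((h - (z - x))%R%:E + (A - eps)%:E)).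
  by rewrite leeD2l //; apply: int_ell => //; exact: hdr.
by rewrite -EFinD lee_fin; lra'.
Qed.

Lemma a_ge0 : (0 <= a)%R.
Proof. by rewrite /a invr_ge0 ltW. Qed.

Lemma M0_ge0 : (0 <= M0)%R.
Proof. by rewrite /M0 divr_ge0 // ?mulr_ge0 // ?addr_ge0 // ltW. Qed.

Lemma c0_ge0 : (0 <= c0)%R.
Proof. by rewrite /c0 mulr_ge0 ?M0_ge0 // subr_ge0 delta_le1. Qed.

Lemma aM0 : (a * (h + A) + c0 = M0)%R.
Proof.
rewrite /a /c0 /M0; field.
by apply/andP; split; apply: lt0r_neq0.
Qed.

Lemma phi_le w : (a * (h + A - f w) + c0 <= M0)%R.
Proof.
rewrite -aM0 lerD2r; apply: ler_wpM2l; first exact: a_ge0.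
by rewrite lerBlDr lerDl f_ge0.
Qed.

Lemma phi_ge w : (c0 <= a * (h + A - f w) + c0)%R.
Proof. by rewrite lerDr mulr_ge0 ?a_ge0 // subr_ge0 f_le. Qed.

Lemma inv N : forall z,
  ((z <= c)%R -> v N z <= (a * (h + A - f z) + c0)%R%:E) /\ ((c < z)%R -> v N z + M0%:E * stay_above P c N z <= M0%:E).
Proof.
elim: N => [|N IH] z.
  have v0 : v 0 z = 0 by rewrite /v big_geq.
  rewrite v0; split => _.
  - by rewrite lee_fin (le_trans c0_ge0 (phi_ge z)).
  - by rewrite add0e /= mule1.
have IHp : forall w, v N w <= (a * (h + A - f w) + c0)%R%:E.
  move=> w; have [wc|cw] := leP w c; first exact: (IH w).1.
  have := (IH w).2 cw; have := @sdel N w (ltW cw); have := v_ge0 N w.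
  have := stay_le1 c N w; have := stay_ge0 c N w; have := phi_ge w; have := M0_ge0.
  case: (v N w) => [r| |] //; case: (stay_above P c N w) => [s| |] //.
  rewrite -EFinM -EFinD !lee_fin => M00 pg s0 s1 r0 ds H.
  have : (M0 * delta <= M0 * s)%R by apply: ler_wpM2l.
  move: pg; rewrite /c0 mulrBr mulr1 => pg.
  lra'.
split.
- move=> zc; rewrite v_S.
  apply: (@le_trans _ _ (ind z + \int[P z]_w (a%:E * (h + A - f w)%R%:E + c0%:E))).
    rewrite leeD2l //; apply: ge0_le_integral => //.
    + by move=> w _; exact: v_ge0.
    + exact: v_meas.
    + apply: emeasurable_funD; last exact: measurable_cst.
      apply: emeasurable_funM; [exact: measurable_cst|exact: mg].
  rewrite ge0_integralD //; first last.
  + by move=> w _; rewrite lee_fin c0_ge0.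
  + apply: emeasurable_funM; [exact: measurable_cst|exact: mg].
  + by move=> w _; apply: mule_ge0; [rewrite lee_fin a_ge0|exact: g_ge0].
  rewrite ge0_integralZl_EFin //; first last.
  + exact: a_ge0.
  + exact: mg.
  + by move=> w _; exact: g_ge0.
  rewrite int_cst'.
  have Hd := @drift_int z zc.
  have I0 : 0 <= \int[P z]_w (h + A - f w)%R%:E by apply: integral_ge0 => w _; exact: g_ge0.
  move: I0 Hd; case: (\int[P z]_w (h + A - f w)%R%:E) => [r| |] //.
  rewrite !lee_fin => r0 Hr.
  have : (a * r <= a * (h + A - f z - eps * \1_B z))%R by apply: ler_wpM2l => //; exact: a_ge0.
  have ae : (a * eps = 1)%R by rewrite /a mulVf // lt0r_neq0.
  rewrite mulrBr (mulrA a eps) ae mul1r.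
  lra'.
- move=> cz; rewrite v_S stay_S.
  have -> : ind z = 0 by rewrite /ind indicE mem_setE in_itv /= leNgt cz andbF.
  rewrite add0e -ge0_integralZl_EFin //; first last.
  + exact: M0_ge0.
  + by apply: emeasurable_funM => //; [exact: meas_ind| exact: stay_meas].
  + by move=> w _; apply: mule_ge0; [exact: ind_ge0|exact: stay_ge0].
  rewrite -ge0_integralD //; first last.
  + apply: emeasurable_funM; first exact: measurable_cst.
    by apply: emeasurable_funM => //; [exact: meas_ind| exact: stay_meas].
  + move=> w _; apply: mule_ge0; first by rewrite lee_fin M0_ge0.
    by apply: mule_ge0; [exact: ind_ge0|exact: stay_ge0].
  + exact: v_meas.
  + by move=> w _; exact: v_ge0.
  apply: (@le_trans _ _ (\int[P z]_w (cst M0%:E) w)); last by rewrite int_cst'.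
  apply: ge0_le_integral => //.
  + move=> w _; apply: adde_ge0; first exact: v_ge0.
    apply: mule_ge0; first by rewrite lee_fin M0_ge0.
    by apply: mule_ge0; [exact: ind_ge0|exact: stay_ge0].
  + apply: emeasurable_funD; first exact: v_meas.
    apply: emeasurable_funM; first exact: measurable_cst.
    by apply: emeasurable_funM => //; [exact: meas_ind| exact: stay_meas].
  + move=> w _ /=; have [wc|cw] := leP w c.
    * have -> : (\1_(`]c, +oo[) w : R) = 0%R.
        by rewrite indicE mem_setE in_itv /= andbT ltNge wc.
      rewrite mul0e mule0 adde0; apply: le_trans (IHp w) _.
      by rewrite lee_fin phi_le.
    * have -> : (\1_(`]c, +oo[) w : R) = 1%R.
        by rewrite indicE mem_setE in_itv /= andbT cw.
      by rewrite mul1e; exact: (IH w).2.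
Qed.

Lemma v_le N z : v N z <= M0%:E.
Proof.
have [zc|cz] := leP z c.
  by apply: le_trans ((inv N z).1 zc) _; rewrite lee_fin phi_le.
apply: le_trans ((inv N z).2 cz); apply: leeDl.
by apply: mule_ge0; [rewrite lee_fin M0_ge0|exact: stay_ge0].
Qed.

Lemma renewal_le (mu : probability R R) : renewal P mu B <= M0%:E.
Proof.
rewrite /renewal; apply: lime_le.
  apply: is_cvg_nneseries => n _ _; apply: integral_ge0 => y _.
  by apply: kpow_ge0; exact: ind_ge0.
apply: nearW => N.
have -> : \sum_(0 <= n < N) chain_law P mu n B = \int[mu]_y v N y.
  rewrite /v ge0_integral_sum //.
  - by move=> n; apply: kpow_meas; [exact: ind_ge0'|exact: mind].
  - by move=> n w _; apply: kpow_ge0; exact: ind_ge0'.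
apply: (@le_trans _ _ (\int[mu]_y (cst M0%:E) y)).
  apply: ge0_le_integral => //.
  - by move=> w _; exact: v_ge0.
  - exact: v_meas.
  - by move=> w _; exact: v_le.
rewrite integral_cst //; move: (probability_setT mu) => e.
apply: (@le_trans _ _ (M0%:E * 1)); last by rewrite mule1.
by rewrite -e; exact: le_refl.
Qed.
End Main.
End S.

Theorem theorem2 (R : realType) (P : R.-pker R ~> R) (mu : probability R R)
  (A eps delta : R) (hA : 0 < A)
  (heps : ereal_inf [set trunc_drift P A x | x in [set: R]] = eps%:E)
  (heps0 : 0 < eps)
  (hdelta : ereal_inf [set never_below P x | x in [set: R]] = delta%:E)
  (hdelta0 : 0 < delta) :
  (forall (x h : R), 0 < h ->
     (renewal P mu `]x, (x + h)%R] <= ((A + h) / (eps * delta))%:E)%E)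
  /\ (exists M : R, forall k : int,
     (renewal P mu `]k%:~R, (k%:~R + 1)%R] <= M%:E)%E).
Proof.
have hdr : forall z, (eps%:E <= trunc_drift P A z)%E.
  by move=> z; rewrite -heps; apply: ereal_inf_lbound; exists z.
have hdl : forall z, (delta%:E <= never_below P z)%E.
  by move=> z; rewrite -hdelta; apply: ereal_inf_lbound; exists z.
have main : forall (x h : R), 0 < h ->
     (renewal P mu `]x, (x + h)%R] <= ((A + h) / (eps * delta))%:E)%E.
  by move=> x h h0; apply: renewal_le.
split; first exact: main.
by exists ((A + 1) / (eps * delta)); move=> k; apply: main; exact: ltr01.
Qed.
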